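(* Let $P\in\mathfrak N_2$ and let $R$ be a retract of $P$ of width three which is a tower of nice sections. Then for every $\ell\in[0,h_R-1]$ the level pair $R(\ell)\cup R(\ell+1)$ is not of type $33$. In particular, if $|R(\ell)|=3$ for all $\ell\in[0,h_R]$, then $R=P$.
   Context: All posets are finite; $h_P$ is the height; level sets $P(0)=\min P$, $P(k+1)=\min(P\setminus\bigcup_{i\le k}P(i))$; level sets $R(\ell)$ of a retract refer to $R$'s own levels. $A<B$ means $a<b$ for all $a\in A,b\in B$. Type $33$ means isomorphic to the ordinal sum of two 3-element antichains. A retract is the image of an idempotent order-preserving self-map. A section is either a 2-element antichain or a poset $P$ of height $h_P\ge1$ with carrier $\{c_{k,j}:k\in[0,h_P],j\in\{0,1,2\}\}$ such that: $c_{0,j}<\dots<c_{h_P,j}$ for each $j$; each $\{c_{k,0},c_{k,1},c_{k,2}\}$ is an antichain; $c_{k,i}<c_{\ell,j}\Rightarrow c_{k,i+1}<c_{\ell,j+1}$ (indices mod 3); and no $P(k)\cup P(k+1)$ is of type $33$. A section is nice if for all $x<y$: $\{z:z>x\}\not\subseteq\{z:z\ge y\}$ and $\{z:z<y\}\not\subseteq\{z:z\le x\}$. A tower of nice sections is an ordinal sum of nice sections. $\mathfrak N_2$ is the class of nice sections of width three of height $\ge2$ with horizon 2, i.e. $P(k)<P(\ell)$ whenever $\ell\ge k+2$. *)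

(* Defs.v *)
(* Finite posets are finPOrderType's; subposets are subsets
   {set T} carrying the induced order. *)
From HB Require Import structures.
From mathcomp Require Import all_boot all_order.
Set Implicit Arguments. Unset Strict Implicit. Unset Printing Implicit Defensive.
Import Order.Theory.
Local Open Scope order_scope.

Section PosetDefs.
Context {d : Order.disp_t} {T : finPOrderType d}.

Definition set_lt (A B : {set T}) : Prop :=
  forall a b, a \in A -> b \in B -> a < b.

Definition antichain (A : {set T}) : bool :=
  [forall x in A, forall y in A, (x >=< y) ==> (x == y)].

Definition chain (A : {set T}) : bool :=
  [forall x in A, forall y in A, x >=< y].

Definition width (S : {set T}) : nat :=
  \max_(A : {set T} | (A \subset S) && antichain A) #|A|.

Definition height (S : {set T}) : nat :=
  (\max_(C : {set T} | (C \subset S) && chain C) #|C|).-1.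

Definition mins (X : {set T}) : {set T} :=
  [set x in X | [forall y in X, ~~ (y < x)]].

Fixpoint rest (S : {set T}) (k : nat) : {set T} :=
  match k with
  | 0 => S
  | k'.+1 => rest S k' :\: mins (rest S k')
  end.

Definition level (S : {set T}) (k : nat) : {set T} := mins (rest S k).

(* X (with induced order) is of type 33: isomorphic to the ordinal sum of
   two 3-element antichains *)
Definition type33 (X : {set T}) : Prop :=
  exists A B : {set T}, [/\ A :|: B = X, A :&: B = set0 & #|A| = 3] /\
    [/\ #|B| = 3, antichain A, antichain B & set_lt A B].

Definition is_section (S : {set T}) : Prop :=
  (#|S| = 2 /\ antichain S) \/
  (1 <= height S)%N /\
  exists c : nat -> 'I_3 -> T,
    let h := height S in
    [/\ (forall k l i j, (k <= h)%N -> (l <= h)%N -> c k i = c l j -> k = l /\ i = j),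
        (forall x, x \in S <-> exists k j, (k <= h)%N /\ c k j = x)
      & (forall k j, (k < h)%N -> c k j < c k.+1 j)] /\
    [/\ (forall k i j, (k <= h)%N -> i != j -> ~~ (c k i >=< c k j)),
        (forall k l i j, (k <= h)%N -> (l <= h)%N ->
            c k i < c l j -> c k (ordS i) < c l (ordS j))
      & (forall k, ~ type33 (level S k :|: level S k.+1))].

Definition nice (S : {set T}) : Prop :=
  forall x y, x \in S -> y \in S -> x < y ->
    ~ ([set z in S | x < z] \subset [set z in S | y <= z]) /\
    ~ ([set z in S | z < y] \subset [set z in S | z <= x]).

Definition nice_section (S : {set T}) : Prop := is_section S /\ nice S.

Definition tower_of_nice_sections (R : {set T}) : Prop :=
  exists s : seq {set T},
    [/\ (forall i, (i < size s)%N -> nice_section (nth set0 s i)),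
        (forall i j, (i < j < size s)%N -> set_lt (nth set0 s i) (nth set0 s j)),
        (forall i j, (i < size s)%N -> (j < size s)%N -> i <> j ->
            nth set0 s i :&: nth set0 s j = set0)
      & \bigcup_(X <- s) X = R].

Definition horizon2 (S : {set T}) : Prop :=
  forall k l, (k.+2 <= l)%N -> set_lt (level S k) (level S l).

Definition in_N2 (S : {set T}) : Prop :=
  [/\ nice_section S, width S = 3, (2 <= height S)%N & horizon2 S].

Definition retract_of (R S : {set T}) : Prop :=
  exists f : T -> T,
    [/\ (forall x, x \in S -> f x \in S),
        (forall x y, x \in S -> y \in S -> x <= y -> f x <= f y),
        (forall x, x \in S -> f (f x) = f x)
      & R = [set f x | x in S]].

End PosetDefs.

(* Main.v *)
Require Import Defs.
From mathcomp Require Import all_boot all_order.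
From mathcomp Require Import zify.
Set Implicit Arguments. Unset Strict Implicit. Unset Printing Implicit Defensive.

Definition o0 : 'I_3 := @Ordinal 3 0 isT.
Definition o1 : 'I_3 := @Ordinal 3 1 isT.
Definition o2 : 'I_3 := @Ordinal 3 2 isT.

Lemma I3cases (i : 'I_3) : [\/ i = o0, i = o1 | i = o2].
Proof.
case: i => [[|[|[|m]]] Hm].
- by apply: Or31; apply/val_inj.
- by apply: Or32; apply/val_inj.
- by apply: Or33; apply/val_inj.
- by [].
Qed.

Lemma ordS0 : ordS o0 = o1. Proof. by apply/val_inj. Qed.
Lemma ordS1 : ordS o1 = o2. Proof. by apply/val_inj. Qed.
Lemma ordS2 : ordS o2 = o0. Proof. by apply/val_inj. Qed.

Lemma o01 : o0 != o1. Proof. by []. Qed.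
Lemma o02 : o0 != o2. Proof. by []. Qed.
Lemma o12 : o1 != o2. Proof. by []. Qed.

Section Shift.
Variable rel : 'I_3 -> 'I_3 -> bool.
Hypothesis sh : forall i k, rel i k = rel (ordS i) (ordS k).

Lemma r11 : rel o1 o1 = rel o0 o0. Proof. by rewrite (sh o0) ordS0. Qed.
Lemma r22 : rel o2 o2 = rel o0 o0. Proof. by rewrite (sh o2) ordS2. Qed.
Lemma r12 : rel o1 o2 = rel o0 o1. Proof. by rewrite (sh o0) ordS0 ordS1. Qed.
Lemma r20 : rel o2 o0 = rel o0 o1. Proof. by rewrite (sh o2) ordS2 ordS0. Qed.
Lemma r10 : rel o1 o0 = rel o0 o2. Proof. by rewrite (sh o0) ordS0 ordS2. Qed.
Lemma r21 : rel o2 o1 = rel o0 o2. Proof. by rewrite (sh o2) ordS2 ordS1. Qed.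

Lemma rel_all : rel o0 o0 -> rel o0 o1 -> rel o0 o2 -> forall i k, rel i k.
Proof.
move=> h0 h1 h2 i k.
by case: (I3cases i) => ->; case: (I3cases k) => ->;
  rewrite ?r11 ?r22 ?r12 ?r20 ?r10 ?r21.
Qed.

Lemma rel_2x2 i1 i2 k1 k2 : i1 != i2 -> k1 != k2 ->
  rel i1 k1 -> rel i1 k2 -> rel i2 k1 -> rel i2 k2 -> forall i k, rel i k.
Proof.
move=> ni nk.
case: (I3cases i1) ni => ->; case: (I3cases i2) => -> // _;
case: (I3cases k1) nk => ->; case: (I3cases k2) => -> // _;
rewrite ?r11 ?r22 ?r12 ?r20 ?r10 ?r21 => a b c d; apply: rel_all => //.
Qed.

Lemma rel_notall_col : ~ (forall i k, rel i k) -> forall m, exists j, ~~ rel j m.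
Proof.
move=> nc m; case: (boolP [exists j, ~~ rel j m]) => [/existsP //|/existsPn H].
exfalso; apply: nc; apply: rel_all.
all: move: (H o0) (H o1) (H o2); rewrite !negbK.
all: case: (I3cases m) => ->; rewrite ?r11 ?r22 ?r12 ?r20 ?r10 ?r21 //.
Qed.

Lemma rel_notall_row : ~ (forall i k, rel i k) -> forall m, exists j, ~~ rel m j.
Proof.
move=> nc m; case: (boolP [exists j, ~~ rel m j]) => [/existsP //|/existsPn H].
exfalso; apply: nc; apply: rel_all.
all: move: (H o0) (H o1) (H o2); rewrite !negbK.
all: case: (I3cases m) => ->; rewrite ?r11 ?r22 ?r12 ?r20 ?r10 ?r21 //.
Qed.

Definition predI (b : 'I_3) := [set a | rel a b].

Lemma predIS b : predI (ordS b) = [set ordS a | a in predI b].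
Proof.
apply/setP => a; rewrite !inE.
rewrite -{1}(ord_predK a) -sh.
apply/idP/imsetP => [h|[a' h ->]].
  by exists (ord_pred a); rewrite ?inE // ord_predK.
by rewrite ordSK; move: h; rewrite inE.
Qed.

Lemma card_predIS b : #|predI (ordS b)| = #|predI b|.
Proof. by rewrite predIS card_imset //; apply: ordS_inj. Qed.

Lemma card_predI b b' : #|predI b| = #|predI b'|.
Proof.
have e0 : #|predI o1| = #|predI o0| by rewrite -ordS0 card_predIS.
have e1 : #|predI o2| = #|predI o1| by rewrite -ordS1 card_predIS.
by case: (I3cases b) => ->; case: (I3cases b') => ->; rewrite ?e1 ?e0.
Qed.

Lemma rel_nomix (L : pred 'I_3) b1 b2 :
  (forall a, rel a a) -> ~ (forall i k, rel i k) ->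
  (forall a, L a -> rel a b1) -> (forall a, rel a b2 -> L a) ->
  (forall a, ~~ L a -> forall a', L a' -> rel a' a) -> False.
Proof.
move=> refl nc F1 F2 F3.
case: (boolP [forall a, L a]) => [/forallP allL|/forallPn [a0 na0]].
  apply: nc => i k.
  have: #|predI k| = 3.
    rewrite (card_predI k b1).
    have -> : predI b1 = setT by apply/setP => a; rewrite !inE F1 ?allL.
    by rewrite cardsT card_ord.
  move=> c3; have: predI k = setT.
    by apply/eqP; rewrite eqEcard subsetT cardsT card_ord c3.
  by move/setP/(_ i); rewrite !inE.
have s1 : (a0 |: [set a | L a]) \subset predI a0.
  apply/subsetP => a; rewrite !inE => /orP[/eqP ->|La]; first exact: refl.
  exact: F3.
have s2 : predI b2 \subset [set a | L a].
  by apply/subsetP => a; rewrite !inE; apply: F2.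
move: (subset_leq_card s1) (subset_leq_card s2).
rewrite cardsU1 inE (negbTE na0) (card_predI b2 a0) /=.
by move=> h1 h2; move: (leq_trans h1 h2); rewrite ltnn.
Qed.
End Shift.

Import Order.Theory.
Local Open Scope order_scope.

Section Levels.
Context {d : Order.disp_t} {T : finPOrderType d}.
Implicit Types (S X : {set T}) (x y z : T).

Lemma min_below X z : z \in X -> exists2 m, m \in mins X & m <= z.
Proof.
have [n] := ubnP #|[set y in X | y < z]|; elim: n z => // n IH z Hn zX.
case: (boolP [exists y in X, y < z]) => [/existsP [y /andP [yX yz]]|/existsPn H].
  have : #|[set w in X | w < y]| < #|[set w in X | w < z]|.
    apply: proper_card; apply/properP; split.
      apply/subsetP => w; rewrite !inE => /andP [-> wy] /=; exact: lt_trans wy yz.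
    by exists y; rewrite !inE ?yX ?yz // ltxx.
  move=> hlt; have [m m1 m2] := IH y (leq_trans hlt (Hn : _ <= n)) yX.
  by exists m => //; apply: le_trans m2 (ltW yz).
exists z => //; rewrite inE zX /=; apply/forallP => y; apply/implyP => yX.
by move: (H y); rewrite yX.
Qed.

Lemma mins_sub X : mins X \subset X.
Proof. by apply/subsetP => x; rewrite inE => /andP []. Qed.

Lemma rest_sub S k : rest S k \subset S.
Proof. elim: k => //= k IH; exact: subset_trans (subsetDl _ _) IH. Qed.

Lemma rest_mono S k k' : (k <= k')%N -> rest S k' \subset rest S k.
Proof.
elim: k' => [|k' IH]; first by rewrite leqn0 => /eqP ->.
rewrite leq_eqVlt => /orP [/eqP ->//|]; rewrite ltnS => /IH.
by apply: subset_trans; exact: subsetDl.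
Qed.

Lemma level_rest S k : level S k \subset rest S k.
Proof. exact: mins_sub. Qed.

Lemma level_sub S k : level S k \subset S.
Proof. exact: subset_trans (level_rest S k) (rest_sub S k). Qed.

Lemma mem_rest S k x :
  x \in rest S k <-> x \in S /\ forall k', (k' < k)%N -> x \notin level S k'.
Proof.
elim: k => [|k IH] /=; first by split=> [->|[]].
rewrite inE; split.
  move=> /andP [nl /IH [xS H]]; split=> // k'; rewrite ltnS leq_eqVlt => /orP [/eqP ->|] //.
  exact: H.
move=> [xS H]; rewrite H //=; apply/IH; split=> // k' lt; apply: H; exact: ltnW.

Qed.

Lemma level_uniq S k k' x : x \in level S k -> x \in level S k' -> k = k'.
Proof.
wlog lt : k k' / (k < k')%N.
  move=> W h1 h2; case: (ltngtP k k') => [l|l|//]; first exact: W.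
  by symmetry; apply: W.
move=> h1 /(subsetP (level_rest S k')) /mem_rest [_ H].
by move: (H k lt); rewrite h1.
Qed.

Lemma level_lt S k k' x y :
  x \in level S k -> y \in level S k' -> x < y -> (k < k')%N.
Proof.
move=> hx hy xy; rewrite ltnNge; apply/negP => le.
have xr : x \in rest S k' by apply: (subsetP (rest_mono S le)); apply: (subsetP (level_rest S k)).
move: hy; rewrite inE => /andP [_ /forallP /(_ x)].
by rewrite xr xy.
Qed.

Lemma level_antichain S k x y : x \in level S k -> y \in level S k -> ~~ (x < y).
Proof. by move=> hx hy; apply/negP => /(level_lt hx hy); rewrite ltnn. Qed.

Lemma level_pred S k y : y \in level S k.+1 -> exists2 x, x \in level S k & x < y.
Proof.
move=> /(subsetP (level_rest S k.+1)) /=; rewrite inE => /andP [ny yr].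
have : ~~ [forall z in rest S k, ~~ (z < y)].
  by apply/negP => H; move: ny; rewrite inE yr H.
move=> /forallPn [z]; rewrite negb_imply negbK => /andP [zr zy].
have [m m1 m2] := min_below zr.
by exists m => //; exact: le_lt_trans m2 zy.
Qed.

Lemma rest_card S k x : x \in rest S k -> (k + #|rest S k| <= #|S|)%N.
Proof.
elim: k => [|k IH]; first by rewrite add0n; move=> _; apply: subset_leq_card; exact: rest_sub.
move=> h.
have h' : x \in rest S k by move: h; rewrite inE => /andP [].
have := IH h'.
have [m m1 _] := min_below h'.
have : (#|rest S k.+1| < #|rest S k|)%N.
  apply: proper_card; apply/properP; split; first exact: subsetDl.
  by exists m; [exact: (subsetP (mins_sub _)) | rewrite inE m1].
lia.
Qed.

Lemma level_exists S x : x \in S -> exists2 k, (k < #|S|)%N & x \in level S k.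
Proof.
move=> xS.
have H : forall k, x \in rest S k \/ exists2 k', (k' < k)%N & x \in level S k'.
  elim=> [|k [h|[k' l h]]]; [by left | | by right; exists k' => //; apply: ltnW].
  case: (boolP (x \in level S k)) => hl; first by right; exists k.
  by left; rewrite /= inE hl h.
case: (H #|S|) => // h; move: (rest_card h).
have : (0 < #|rest S #|S| |)%N by apply/card_gt0P; exists x.
lia.
Qed.

Definition lev S x : nat := odflt 0%N (omap val [pick k : 'I_(#|T|.+1) | x \in level S k]).

Lemma lev_spec S x : x \in S -> x \in level S (lev S x).
Proof.
move=> xS; rewrite /lev; case: pickP => [k //|H].
have [k lk hk] := level_exists xS.
have lk' : (k < #|T|.+1)%N by apply: leq_trans lk _; apply: leq_trans (max_card _) (leqnSn _).
by move: (H (Ordinal lk')); rewrite hk.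
Qed.

Lemma lev_eq S k x : x \in level S k -> lev S x = k.
Proof.
move=> h; apply: (level_uniq (lev_spec _) h).
exact: (subsetP (level_sub S k)).
Qed.

Lemma lev_lt S x y : x \in S -> y \in S -> x < y -> (lev S x < lev S y)%N.
Proof. by move=> xS yS; apply: level_lt; apply: lev_spec. Qed.

Lemma level_chain S k x : x \in level S k ->
  exists C : {set T}, [/\ C \subset S, chain C, (forall c, c \in C -> c <= x) & #|C| = k.+1].
Proof.
elim: k x => [|k IH] x hx.
  exists [set x]; split.
  - by rewrite sub1set; exact: (subsetP (level_sub S 0)).
  - apply/forall_inP => a /set1P ->.
    apply/forall_inP => b /set1P ->; exact: comparablexx.
  - by move=> c /set1P ->.
  - by rewrite cards1.
have [y hy yx] := level_pred hx.
have [C [CS Cc Cle Ccard]] := IH y hy.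
have xC : x \notin C by apply/negP => /Cle xy; move: (le_lt_trans xy yx); rewrite ltxx.
exists (x |: C); split.
- rewrite subUset sub1set CS andbT; exact: (subsetP (level_sub S k.+1)).
- apply/forall_inP => a /setU1P [->|aC];
  apply/forall_inP => b /setU1P [->|bC].
  + exact: comparablexx.
  + by apply: ge_comparable; exact: ltW (le_lt_trans (Cle b bC) yx).
  + by apply: le_comparable; exact: ltW (le_lt_trans (Cle a aC) yx).
  + by move: Cc => /forall_inP /(_ a aC) /forall_inP /(_ b bC).
- move=> c /setU1P [-> //|cC]; exact: ltW (le_lt_trans (Cle c cC) yx).
- by rewrite cardsU1 xC Ccard.
Qed.

Lemma level_height S k x : x \in level S k -> (k <= height S)%N.
Proof.
move=> /level_chain [C [CS Cc _ Cc']].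
rewrite /height.
have : (#|C| <= \max_(C0 : {set T} | (C0 \subset S) && chain C0) #|C0|)%N.
  by apply: leq_bigmax_cond; rewrite CS Cc.
rewrite Cc'; lia.
Qed.

End Levels.

Lemma ordS3 (i : 'I_3) : ordS (ordS (ordS i)) = i.
Proof. by case: (I3cases i) => ->; apply/val_inj. Qed.

Section Grid.
Context {d : Order.disp_t} {T : finPOrderType d}.
Implicit Types (S X : {set T}) (x y z : T).

Definition grid S (c : nat -> 'I_3 -> T) (h : nat) : Prop :=
  [/\ (forall k l i j, (k <= h)%N -> (l <= h)%N -> c k i = c l j -> k = l /\ i = j),
      (forall x, x \in S <-> exists k j, (k <= h)%N /\ c k j = x),
      (forall k j, (k < h)%N -> c k j < c k.+1 j),
      (forall k i j, (k <= h)%N -> i != j -> ~~ (c k i >=< c k j))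
    & (forall k l i j, (k <= h)%N -> (l <= h)%N -> c k i < c l j -> c k (ordS i) < c l (ordS j))].

Definition grow (c : nat -> 'I_3 -> T) k : {set T} := [set c k j | j : 'I_3].

Variables (S : {set T}) (c : nat -> 'I_3 -> T) (h : nat).
Hypothesis Hg : grid S c h.

Lemma g_inj k l i j : (k <= h)%N -> (l <= h)%N -> c k i = c l j -> k = l /\ i = j.
Proof. by case: Hg => inj _ _ _ _; exact: (inj k l i j). Qed.

Lemma g_mem k j : (k <= h)%N -> c k j \in S.
Proof. by move=> kh; case: Hg => _ cov _ _ _; apply/cov; exists k, j. Qed.

Lemma g_cover x : x \in S -> exists k j, (k <= h)%N /\ c k j = x.
Proof. by case: Hg => _ cov _ _ _ /cov. Qed.

Lemma g_chain k j : (k < h)%N -> c k j < c k.+1 j.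
Proof. by case: Hg => _ _ ch _ _; exact: (ch k j). Qed.

Lemma g_anti k i j : (k <= h)%N -> i != j -> ~~ (c k i >=< c k j).
Proof. by case: Hg => _ _ _ an _; exact: (an k i j). Qed.

Lemma g_le k k' j : (k <= k')%N -> (k' <= h)%N -> c k j <= c k' j.
Proof.
elim: k' => [|k' IH]; first by rewrite leqn0 => /eqP ->.
rewrite leq_eqVlt => /orP [/eqP -> //|]; rewrite ltnS => kk h'.
apply: le_trans (IH kk (ltnW h')) _; exact: ltW (g_chain j h').
Qed.

Lemma g_lt_row k l i j : (k <= h)%N -> (l <= h)%N -> c k i < c l j -> (k < l)%N.
Proof.
move=> kh lh lt; rewrite ltnNge; apply/negP => lk.
have := lt_le_trans lt (g_le j lk kh).
case: (eqVneq i j) => [->|ij]; first by rewrite ltxx.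
by move=> /lt_comparable; rewrite (negbTE (g_anti kh ij)).
Qed.

Lemma g_shift k l i j : (k <= h)%N -> (l <= h)%N ->
  (c k i < c l j) = (c k (ordS i) < c l (ordS j)).
Proof.
move=> kh lh; apply/idP/idP; first by case: Hg => _ _ _ _ sh; apply: sh.
case: Hg => _ _ _ _ sh => /(sh _ _ _ _ kh lh) /(sh _ _ _ _ kh lh).
by rewrite !ordS3.
Qed.

Lemma g_lt_neq k l i j : (k <= h)%N -> (l <= h)%N -> k <> l -> c k i <> c l j.
Proof. by move=> kh lh kl /(g_inj kh lh) []. Qed.

Lemma card_grow k : (k <= h)%N -> #|grow c k| = 3.
Proof.
move=> kh; rewrite card_imset ?card_ord //.
by move=> i j /(g_inj kh kh) [].
Qed.

Lemma grow_anti k : (k <= h)%N -> antichain (grow c k).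
Proof.
move=> kh; apply/forall_inP => x /imsetP [i _ ->]; apply/forall_inP => y /imsetP [j _ ->].
apply/implyP; case: (eqVneq i j) => [-> //|ij].
by rewrite (negbTE (g_anti kh ij)).
Qed.

Lemma grid_levels X :
  S \subset X ->
  (forall z, z \in X -> z \notin S -> (forall s, s \in S -> z < s) \/ (forall s, s \in S -> s < z)) ->
  exists b, forall k j, (k <= h)%N -> c k j \in level X (b + k).
Proof.
move=> SX ext.
have cX : forall k j, (k <= h)%N -> c k j \in X.
  by move=> k j kh; apply: (subsetP SX); exact: g_mem.
have below : forall k j n y, (k <= h)%N -> y \in level X n -> y < c k j ->
   (exists i, (0 < k)%N /\ (n <= lev X (c k.-1 i))%N) \/ (forall s, s \in S -> y < s).
  move=> k j n y kh hy yc.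
  have yX : y \in X by apply: (subsetP (level_sub X n)).
  case: (boolP (y \in S)) => yS.
    have [k' [i [k'h e]]] := g_cover yS.
    left; exists i; move: yc; rewrite -e => lt.
    have kk := g_lt_row k'h kh lt.
    split; first by lia.
    have le : c k' i <= c k.-1 i by apply: g_le; lia.
    rewrite -(lev_eq hy) -e.
    case: (eqVneq (c k' i) (c k.-1 i)) => [-> //|ne].
    have m1 : c k' i \in X := cX _ _ k'h.
    have m2 : c k.-1 i \in X by apply: cX; lia.
    by apply: ltnW; apply: lev_lt => //; rewrite lt_neqAle ne le.
  case: (ext y yX yS) => H; first by right.
  by move: (lt_trans yc (H _ (g_mem j kh))); rewrite ltxx.
pose b := lev X (c 0 o0).
have base : forall j, c 0 j \in level X b.
  have H : forall i j, (lev X (c 0 i) <= lev X (c 0 j))%N.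
    move=> i j; case E: (lev X (c 0 i)) => [//|n].
    have := lev_spec (cX 0 i (leq0n h)); rewrite E => /level_pred [y hy yc].
    case: (below 0%N i n y (leq0n h) hy yc) => [[i' [//]]|H].
    rewrite -(lev_eq hy); apply: lev_lt; rewrite ?cX //.
      exact: (subsetP (level_sub X n)).
    exact: H (g_mem j (leq0n h)).
  move=> j; have := lev_spec (cX 0 j (leq0n h)).
  suff -> : lev X (c 0 j) = b by [].
  by apply/eqP; rewrite eqn_leq H H.
exists b; elim=> [|k IH] j kh; first by rewrite addn0.
have kh' : (k <= h)%N by apply: ltnW.
have := lev_spec (cX k.+1 j kh); set n := lev X _ => hn.
have lo : (b + k < n)%N.
  rewrite -(lev_eq (IH j kh')) -(lev_eq hn); apply: lev_lt; rewrite ?cX //.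
  exact: g_chain.
suff hi : (n <= b + k.+1)%N.
  have e : n = (b + k.+1)%N by lia.
  by rewrite -e.
move: hn; case E: n lo => [//|n'] lo hn.
have [y hy yc] := level_pred hn.
case: (below k.+1 j n' y kh hy yc) => [[i [_ le]]|H].
  by move: le; rewrite /= (lev_eq (IH i kh')); lia.
have : (n' < b + k)%N.
  rewrite -(lev_eq (IH j kh')) -(lev_eq hy); apply: lev_lt; rewrite ?cX //.
    exact: (subsetP (level_sub X n')).
  exact: H (g_mem j kh').
lia.
Qed.

Lemma grid_level_self k : (k <= h)%N -> level S k = grow c k.
Proof.
have [b Hb] := grid_levels (subxx S) (fun z zS nzS => ltac:(by rewrite zS in nzS)).
have b0 : b = 0%N.
  case: b Hb => // b Hb; exfalso.
  have := Hb 0%N o0 (leq0n h); rewrite addn0 => /level_pred [y hy yc].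
  have [k' [i [k'h e]]] := g_cover (subsetP (level_sub S b) y hy).
  by move: yc; rewrite -e => /(g_lt_row k'h (leq0n h)).
move: Hb; rewrite b0 => Hb kh.
apply/setP => x; apply/idP/imsetP => [hx|[j _ ->]]; last by rewrite Hb.
have [k' [i [k'h e]]] := g_cover (subsetP (level_sub S k) x hx).
exists i => //; move: (Hb k' i k'h); rewrite add0n e => /(level_uniq hx) ->.
by [].
Qed.

Lemma grid_notcomplete k :
  (forall k, ~ type33 (level S k :|: level S k.+1)) -> (k < h)%N ->
  ~ (forall i j, c k i < c k.+1 j).
Proof.
move=> nt kh all; apply: (nt k).
have kh' : (k <= h)%N by apply: ltnW.
exists (grow c k), (grow c k.+1); split; [split|split].
- by rewrite !grid_level_self.
- apply/setP => x; rewrite !inE; apply/negbTE/negP => /andP [/imsetP [i _ ->] /imsetP [j _]].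
  by move/(g_inj kh' kh) => [/n_Sn].
- exact: card_grow.
- exact: card_grow.
- exact: grow_anti.
- exact: grow_anti.
- by move=> a b' /imsetP [i _ ->] /imsetP [j _ ->].
Qed.

End Grid.

Section Sec.
Context {d : Order.disp_t} {T : finPOrderType d}.
Implicit Types (S X R : {set T}) (x y z : T).

Definition sec_data S (c : nat -> 'I_3 -> T) :=
  [/\ grid S c (height S), (1 <= height S)%N & forall k, ~ type33 (level S k :|: level S k.+1)].

Lemma section_cases S : is_section S -> #|S| = 2 \/ exists c, sec_data S c.
Proof.
case=> [[e _]|[h1 [c [[A1 A2 A3] [B1 B2 B3]]]]]; [by left | right].
by exists c; split.
Qed.

Lemma section_big S (A : {set T}) : is_section S -> A \subset S -> (3 <= #|A|)%N -> exists c, sec_data S c.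
Proof.
move=> /section_cases [e|//] AS cA; exfalso.
by move: (subset_leq_card AS); rewrite e; lia.
Qed.

Lemma antichain_height0 S : antichain S -> height S = 0%N.
Proof.
move=> an; rewrite /height.
suff : (\max_(C : {set T} | (C \subset S) && chain C) #|C| <= 1)%N by lia.
apply/bigmax_leqP => C /andP [CS Cc]; rewrite leqNgt; apply/negP => /card_gt1P [x [y [xC yC xy]]].
move: Cc => /forall_inP /(_ x xC) /forall_inP /(_ y yC) cmp.
move: an => /forall_inP /(_ x (subsetP CS x xC)) /forall_inP /(_ y (subsetP CS y yC)).
by rewrite cmp (negbTE xy).
Qed.

Lemma level_anti R k : antichain (level R k).
Proof.
apply/forall_inP => x hx; apply/forall_inP => y hy; apply/implyP.
move=> /orP [] ; rewrite le_eqVlt => /orP [/eqP -> //|lt].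
  by move: (level_antichain hx hy); rewrite lt.
by move: (level_antichain hy hx); rewrite lt.
Qed.

Lemma antichain_incmp (A : {set T}) x y : antichain A -> x \in A -> y \in A -> x != y -> ~~ (x < y).
Proof.
move=> /forall_inP /(_ x) an xA yA xy; apply/negP => lt.
move: (an xA) => /forall_inP /(_ y yA); rewrite (lt_comparable lt) /=.
by rewrite (negbTE xy).
Qed.

End Sec.

Section Tower.
Context {d : Order.disp_t} {T : finPOrderType d}.
Implicit Types (S X : {set T}) (x y z : T).
Variables (R : {set T}) (s : seq {set T}).
Hypothesis Hsec : forall i, (i < size s)%N -> nice_section (nth set0 s i).
Hypothesis Hlt : forall i j, (i < j < size s)%N -> set_lt (nth set0 s i) (nth set0 s j).
Hypothesis Hdis : forall i j, (i < size s)%N -> (j < size s)%N -> i <> j ->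
            nth set0 s i :&: nth set0 s j = set0.
Hypothesis Hcup : \bigcup_(X <- s) X = R.

Lemma tw_in x : x \in R -> exists2 p, (p < size s)%N & x \in nth set0 s p.
Proof.
rewrite -Hcup bigcup_seq => /bigcupP [X Xs xX].
exists (index X s); first by rewrite index_mem.
by rewrite nth_index.
Qed.

Lemma tw_sub p : (p < size s)%N -> nth set0 s p \subset R.
Proof.
move=> ps; rewrite -Hcup bigcup_seq.
by apply: (bigcup_sup (nth set0 s p)); rewrite mem_nth.
Qed.

Lemma tw_disj p q x : (p < size s)%N -> (q < size s)%N -> x \in nth set0 s p ->
  x \in nth set0 s q -> p = q.
Proof.
move=> ps qs xp xq; case: (eqVneq p q) => // /eqP pq.
by move: (Hdis ps qs pq) => /setP /(_ x); rewrite inE xp xq inE.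
Qed.

Lemma tw_cmp p q x y : (p < size s)%N -> (q < size s)%N -> x \in nth set0 s p ->
  y \in nth set0 s q -> p <> q -> x < y \/ y < x.
Proof.
move=> ps qs xp yq pq; case: (ltngtP p q) => [l|l|//].
  by left; apply: (Hlt (i:=p) (j:=q)) => //; rewrite l qs.
by right; apply: (Hlt (i:=q) (j:=p)) => //; rewrite l ps.
Qed.

Lemma tw_ext p z : (p < size s)%N -> z \in R -> z \notin nth set0 s p ->
  (forall w, w \in nth set0 s p -> z < w) \/ (forall w, w \in nth set0 s p -> w < z).
Proof.
move=> ps zR zp; have [q qs zq] := tw_in zR.
have pq : p <> q by move=> e; move: zp; rewrite e zq.
case: (ltngtP p q) => [l|l|//].
  by right => w wp; apply: (Hlt (i:=p) (j:=q)) => //; rewrite l qs.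
by left => w wp; apply: (Hlt (i:=q) (j:=p)) => //; rewrite l ps.
Qed.

Lemma tw_antichain (A : {set T}) a0 p : antichain A -> A \subset R -> a0 \in A ->
  (p < size s)%N -> a0 \in nth set0 s p -> A \subset nth set0 s p.
Proof.
move=> an AR a0A ps a0p; apply/subsetP => a aA.
have [q qs aq] := tw_in (subsetP AR a aA).
case: (eqVneq p q) => [-> //|/eqP pq].
case: (eqVneq a a0) => [-> //|ne].
case: (tw_cmp qs ps aq a0p (fun e => pq (esym e))) => lt.
  by move: (antichain_incmp an aA a0A ne); rewrite lt.
have ne' : a0 != a by rewrite eq_sym.
by move: (antichain_incmp an a0A aA ne'); rewrite lt.
Qed.

Lemma level_in_grid S c h b m :
  grid S c h -> (forall k j, (k <= h)%N -> c k j \in level R (b + k)) ->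
  #|level R m| = 3 -> level R m \subset S ->
  [/\ (b <= m)%N, (m - b <= h)%N & level R m = grow c (m - b)].
Proof.
move=> Hg Hb c3 LS.
have [x hx] : exists x, x \in level R m by apply/set0Pn; rewrite -card_gt0 c3.
have [k [j [kh e]]] := g_cover Hg (subsetP LS x hx).
have e1 : m = (b + k)%N by apply: (level_uniq hx); rewrite -e; apply: Hb.
have sub : level R m \subset grow c (m - b).
  apply/subsetP => y hy; have [k' [j' [k'h e']]] := g_cover Hg (subsetP LS y hy).
  have : m = (b + k')%N by apply: (level_uniq hy); rewrite -e'; apply: Hb.
  move=> e2; apply/imsetP; exists j' => //; rewrite -e'.
  by have -> : (m - b)%N = k' by lia.
split; [lia | lia |].
apply/eqP; rewrite eqEcard sub /= c3 (card_grow Hg) //; lia.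
Qed.

Lemma row_of_level m : #|level R m| = 3 ->
  exists p c b, [/\ (p < size s)%N, sec_data (nth set0 s p) c, nice (nth set0 s p),
     forall k j, (k <= height (nth set0 s p))%N -> c k j \in level R (b + k)
   & [/\ (b <= m)%N, (m - b <= height (nth set0 s p))%N
   & level R m = grow c (m - b)]].
Proof.
move=> c3.
have [x hx] : exists x, x \in level R m by apply/set0Pn; rewrite -card_gt0 c3.
have [p ps xp] := tw_in (subsetP (level_sub R m) x hx).
have LS : level R m \subset nth set0 s p.
  exact: (tw_antichain (level_anti R m) (level_sub R m) hx ps xp).
have [sec nic] := Hsec ps.
have [c cd] := section_big sec LS (eq_leq (esym c3)).
case: (cd) => Hg _ _.
have [b Hb] := grid_levels Hg (tw_sub ps) (fun z zR zp => tw_ext ps zR zp).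
have [l1 l2 l3] := level_in_grid Hg Hb c3 LS.
by exists p, c, b; split.
Qed.

End Tower.

Section Nice.
Context {d : Order.disp_t} {T : finPOrderType d}.
Variables (S : {set T}) (c : nat -> 'I_3 -> T).
Hypothesis Hs : sec_data S c.
Hypothesis Hn : nice S.

Let h := height S.
Let Hg : grid S c h. Proof. by case: Hs. Qed.
Let h1 : (1 <= h)%N. Proof. by case: Hs. Qed.
Let nt : forall k, ~ type33 (level S k :|: level S k.+1). Proof. by case: Hs. Qed.

Lemma nice_top m : exists j i, [/\ i != j, c h.-1 j < c h j, c h.-1 j < c h i
   & ~~ (c h.-1 j < c h m)].
Proof.
have eh : h.-1.+1 = h by rewrite prednK.
have hh : (h.-1 <= h)%N by apply: leq_pred.
have up : forall j, exists2 i, i != j & c h.-1 j < c h i.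
  move=> j.
  have lt : c h.-1 j < c h j by rewrite -{2}eh; apply: (g_chain Hg); rewrite eh.
  have [H _] := Hn (g_mem Hg j hh) (g_mem Hg j (leqnn h)) lt.
  have /subsetPn [z] : ~~ ([set z in S | c h.-1 j < z] \subset [set z in S | c h j <= z]).
    by apply/negP.
  rewrite !inE => /andP [zS xz]; rewrite zS /= => nyz.
  have [k [i [kh e]]] := g_cover Hg zS.
  move: xz nyz; rewrite -e => xz nyz.
  have := g_lt_row Hg hh kh xz; rewrite eh => hk.
  have ek : k = h by apply/eqP; rewrite eqn_leq kh hk.
  move: xz nyz; rewrite ek => xz nyz.
  exists i => //; apply/negP => /eqP eij; move: nyz; by rewrite eij lexx.
have nc : ~ (forall i k, c h.-1 i < c h k).
  by move=> H; apply: (grid_notcomplete Hg nt (k:=h.-1)); rewrite ?eh // ltn_predL.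
have sh : forall i k, (c h.-1 i < c h k) = (c h.-1 (ordS i) < c h (ordS k)).
  by move=> i k; apply: (g_shift Hg).
have [j nj] := rel_notall_col sh nc m.
have [i ij lt] := up j.
exists j, i; split => //.
by rewrite -{2}eh; apply: (g_chain Hg); rewrite eh.
Qed.

Lemma nice_bot m : exists j i, [/\ i != j, c 0 j < c 1 j, c 0 i < c 1 j
   & ~~ (c 0 m < c 1 j)].
Proof.
have h0 : (0 <= h)%N by [].
have dn : forall j, exists2 i, i != j & c 0 i < c 1 j.
  move=> j.
  have lt : c 0 j < c 1 j by apply: (g_chain Hg).
  have [_ H] := Hn (g_mem Hg j h0) (g_mem Hg j h1) lt.
  have /subsetPn [z] : ~~ ([set z in S | z < c 1 j] \subset [set z in S | z <= c 0 j]).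
    by apply/negP.
  rewrite !inE => /andP [zS xz]; rewrite zS /= => nyz.
  have [k [i [kh e]]] := g_cover Hg zS.
  move: xz nyz; rewrite -e => xz nyz.
  have := g_lt_row Hg kh h1 xz; rewrite ltnS leqn0 => /eqP ek.
  move: xz nyz; rewrite ek => xz nyz.
  exists i => //; apply/negP => /eqP eij; move: nyz; by rewrite eij lexx.
have nc : ~ (forall i k, c 0 i < c 1 k).
  by move=> H; apply: (grid_notcomplete Hg nt (k:=0)).
have sh : forall i k, (c 0 i < c 1 k) = (c 0 (ordS i) < c 1 (ordS k)).
  by move=> i k; apply: (g_shift Hg).
have [j nj] := rel_notall_row sh nc m.
have [i ij lt] := dn j.
exists j, i; split => //; exact: (g_chain Hg).
Qed.

End Nice.

Section PP.
Context {d : Order.disp_t} {T : finPOrderType d}.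
Variables (cP : nat -> 'I_3 -> T) (hP : nat).
Hypothesis HgP : grid [set: T] cP hP.
Hypothesis HnP : forall k, ~ type33 (level [set: T] k :|: level [set: T] k.+1).
Hypothesis Hhor : horizon2 [set: T].

Definition posP (x : T) := [pick kj : 'I_(hP.+1) * 'I_3 | cP kj.1 kj.2 == x].
Definition rowP x := if posP x is Some kj then val kj.1 else 0%N.
Definition colP x := if posP x is Some kj then kj.2 else o0.

Lemma posP_spec x : (rowP x <= hP)%N /\ cP (rowP x) (colP x) = x.
Proof.
rewrite /rowP /colP /posP; case: pickP => [[k j] /= /eqP e|H].
  by split=> //; rewrite -ltnS.
exfalso; have [k [j [kh e]]] := g_cover HgP (in_setT x).
by move: (H (Ordinal (kh : (k < hP.+1)%N), j)); rewrite /= e eqxx.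
Qed.

Lemma rowP_le x : (rowP x <= hP)%N. Proof. by case: (posP_spec x). Qed.
Lemma cP_pos x : cP (rowP x) (colP x) = x. Proof. by case: (posP_spec x). Qed.

Lemma pos_cP k j : (k <= hP)%N -> rowP (cP k j) = k /\ colP (cP k j) = j.
Proof.
move=> kh; have := cP_pos (cP k j) => /(g_inj HgP (rowP_le _) kh) [-> ->].
by [].
Qed.

Lemma rowP_lt x y : x < y -> (rowP x < rowP y)%N.
Proof.
rewrite -{1}(cP_pos x) -{1}(cP_pos y); apply: (g_lt_row HgP); exact: rowP_le.
Qed.

Lemma P_lev k : (k <= hP)%N -> level [set: T] k = grow cP k.
Proof. exact: (grid_level_self HgP). Qed.

Lemma in_Plev x : x \in level [set: T] (rowP x).
Proof. by rewrite P_lev ?rowP_le //; apply/imsetP; exists (colP x); rewrite ?cP_pos. Qed.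

Lemma P_hor x y : (rowP x + 2 <= rowP y)%N -> x < y.
Proof. move=> l; apply: (Hhor (k:=rowP x) (l:=rowP y)); rewrite ?in_Plev //; lia. Qed.

Lemma P_nc t : (t < hP)%N -> ~ (forall i j, cP t i < cP t.+1 j).
Proof. exact: (grid_notcomplete HgP HnP). Qed.

Lemma same_row x y : rowP x = rowP y -> colP x = colP y -> x = y.
Proof. by move=> e1 e2; rewrite -(cP_pos x) -(cP_pos y) e1 e2. Qed.

Lemma P_le_col x k : (rowP x <= k)%N -> (k <= hP)%N -> x <= cP k (colP x).
Proof. by move=> l1 l2; rewrite -{1}(cP_pos x); apply: (g_le HgP). Qed.

Lemma P_ge_col x k : (k <= rowP x)%N -> cP k (colP x) <= x.
Proof. by move=> l1; rewrite -{2}(cP_pos x); apply: (g_le HgP) => //; exact: rowP_le. Qed.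

(* column pigeonhole: an antichain of size three meets every column *)
Lemma antichain_col (B : {set T}) j : antichain B -> #|B| = 3 ->
  exists2 b, b \in B & colP b = j.
Proof.
move=> an c3.
have inj : {in B &, injective colP}.
  move=> x y xB yB e; apply/eqP; apply/negPn/negP => ne.
  case: (ltngtP (rowP x) (rowP y)) => [l|l|e'].
  - have : x < y.
      rewrite lt_neqAle ne /=; apply: le_trans (P_le_col (ltnW l) (rowP_le y)) _.
      by rewrite e cP_pos.
    by rewrite (negbTE (antichain_incmp an xB yB ne)).
  - have ne' : y != x by rewrite eq_sym.
    have : y < x.
      rewrite lt_neqAle ne' /=; apply: le_trans (P_le_col (ltnW l) (rowP_le x)) _.
      by rewrite -e cP_pos.
    by rewrite (negbTE (antichain_incmp an yB xB ne')).
  - by move: ne; rewrite (same_row e' e) eqxx.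
have : #|[set colP b | b in B]| = 3 by rewrite card_in_imset.
move=> c3'; have : [set colP b | b in B] = setT.
  by apply/eqP; rewrite eqEcard subsetT cardsT card_ord c3'.
by move/setP/(_ j); rewrite inE => /imsetP [b bB ->]; exists b.
Qed.

End PP.

Lemma thr (Q : nat -> bool) p q : (p <= q)%N -> Q p -> ~~ Q q ->
  exists t, [/\ (p <= t)%N, (t < q)%N, Q t & ~~ Q t.+1].
Proof.
elim: q => [|q IH]; first by rewrite leqn0 => /eqP -> ->.
rewrite leq_eqVlt => /orP [/eqP -> -> //|]; rewrite ltnS => pq Qp nQ.
case: (boolP (Q q)) => Qq; first by exists q; split.
have [t [l1 l2 l3 l4]] := IH pq Qp Qq.
by exists t; split => //; apply: ltnW.
Qed.

Section Core.
Context {d : Order.disp_t} {T : finPOrderType d}.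
Variables (cP : nat -> 'I_3 -> T) (hP : nat).
Hypothesis HgP : grid [set: T] cP hP.
Hypothesis HnP : forall k, ~ type33 (level [set: T] k :|: level [set: T] k.+1).
Hypothesis Hhor : horizon2 [set: T].
Variables (f : T -> T) (R : {set T}).
Hypothesis Hmono : forall x y, x <= y -> f x <= f y.
Hypothesis HfR : forall x, f x \in R.
Hypothesis Hfix : forall r, r \in R -> f r = r.

Local Notation rowP := (rowP cP hP).
Local Notation colP := (colP cP hP).

Lemma core l :
  #|level R l| = 3 -> #|level R l.+1| = 3 -> set_lt (level R l) (level R l.+1) ->
  (forall a, a \in level R l -> exists a' a1 a2, [/\ a' \in R, a1 \in level R l, a2 \in level R l,
       a1 != a2 & [/\ a' < a1, a' < a2 & ~~ (a' <= a)]]) ->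
  (forall b, b \in level R l.+1 -> exists b' b1 b2, [/\ b' \in R, b1 \in level R l.+1,
       b2 \in level R l.+1, b1 != b2 & [/\ b1 < b', b2 < b' & ~~ (b <= b')]]) ->
  False.
Proof.
move=> cA cB AB Ha Hb.
have [a aA] : exists a, a \in level R l by apply/set0Pn; rewrite -card_gt0 cA.
set j := colP a.
have [b bB bj] := antichain_col HgP j (level_anti R l.+1) cB.
have ab := AB a b aA bB.
set p := rowP a; set q := rowP b.
have pq : (p < q)%N := rowP_lt HgP ab.
have qh : (q <= hP)%N := rowP_le HgP b.
have ea : cP p j = a := cP_pos HgP a.
have eb : cP q j = b by rewrite -bj; exact: cP_pos.
have aR : a \in R := subsetP (level_sub R l) a aA.
have bR : b \in R := subsetP (level_sub R l.+1) b bB.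
have la : lev R a = l := lev_eq aA.
have lb : lev R b = l.+1 := lev_eq bB.
pose low t := (lev R (f (cP t j)) <= l)%N.
have lowp : low p by rewrite /low ea Hfix // la.
have nlowq : ~~ low q by rewrite /low eb Hfix // lb -ltnNge.
have [t [pt tq lt nlt]] := thr (ltnW pq) lowp nlowq.
have th : (t < hP)%N by apply: leq_trans tq qh.
have th' : (t <= hP)%N by apply: ltnW.
set x := cP t j; set y := cP t.+1 j.
move: lt nlt; rewrite /low -/x -/y => lt nlt.
have fx : f x = a.
  have ax : a <= f x by rewrite -(Hfix aR); apply: Hmono; rewrite -ea; apply: (g_le HgP).
  case: (eqVneq (f x) a) => // ne; exfalso.
  have : a < f x by rewrite lt_neqAle eq_sym ne ax.
  by move/(lev_lt aR (HfR x)); rewrite la; clear -lt; lia.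
have fy : f y = b.
  have yb : f y <= b by rewrite -(Hfix bR); apply: Hmono; rewrite -eb; apply: (g_le HgP).
  case: (eqVneq (f y) b) => // ne; exfalso.
  have : f y < b by rewrite lt_neqAle ne yb.
  by move/(lev_lt (HfR y) bR); rewrite lb; clear -nlt; lia.
have [a' [a1 [a2 [a'R a1A a2A a12 [a'1 a'2 na']]]]] := Ha a aA.
have [b' [b1 [b2 [b'R b1B b2B b12 [b'1 b'2 nb']]]]] := Hb b bB.
have rx : rowP x = t by case: (pos_cP HgP j th').
have ry : rowP y = t.+1 by case: (pos_cP HgP j th).
have r1 : (t <= rowP a' + 1)%N.
  rewrite leqNgt; apply/negP => l1.
  have : a' <= x by apply: ltW; apply: (P_hor HgP Hhor); rewrite rx; clear -l1; lia.
  by move/Hmono; rewrite fx (Hfix a'R) (negbTE na').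
have r2 : (rowP b' <= t.+2)%N.
  rewrite leqNgt; apply/negP => l1.
  have : y <= b' by apply: ltW; apply: (P_hor HgP Hhor); rewrite ry; clear -l1; lia.
  by move/Hmono; rewrite fy (Hfix b'R) (negbTE nb').
have ra1 := rowP_lt HgP a'1; have ra2 := rowP_lt HgP a'2.
have rb1 := rowP_lt HgP b'1; have rb2 := rowP_lt HgP b'2.
have r11 := rowP_lt HgP (AB _ _ a1A b1B); have r12 := rowP_lt HgP (AB _ _ a1A b2B).
have r21 := rowP_lt HgP (AB _ _ a2A b1B); have r22 := rowP_lt HgP (AB _ _ a2A b2B).
have e1 : rowP a1 = t by clear -r1 ra1 r11 rb1 r2; lia.
have e2 : rowP a2 = t by clear -r1 ra2 r21 rb1 r2; lia.
have e3 : rowP b1 = t.+1 by clear -r1 ra1 r11 rb1 r2; lia.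
have e4 : rowP b2 = t.+1 by clear -r1 ra1 r12 rb2 r2; lia.
have c12 : colP a1 != colP a2.
  by apply/negP => /eqP e; move: a12; rewrite (same_row HgP (etrans e1 (esym e2)) e) eqxx.
have d12 : colP b1 != colP b2.
  by apply/negP => /eqP e; move: b12; rewrite (same_row HgP (etrans e3 (esym e4)) e) eqxx.
have E1 : cP t (colP a1) = a1 by rewrite -e1 cP_pos.
have E2 : cP t (colP a2) = a2 by rewrite -e2 cP_pos.
have E3 : cP t.+1 (colP b1) = b1 by rewrite -e3 cP_pos.
have E4 : cP t.+1 (colP b2) = b2 by rewrite -e4 cP_pos.
have sh : forall i k, (cP t i < cP t.+1 k) = (cP t (ordS i) < cP t.+1 (ordS k)).
  by move=> i k; apply: (g_shift HgP).
apply: (P_nc HgP HnP th).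
apply: (rel_2x2 sh c12 d12); rewrite ?E1 ?E2 ?E3 ?E4; apply: AB.
all: by [].
Qed.

End Core.

Section Final.
Context {d : Order.disp_t} {T : finPOrderType d}.
Variables (cP : nat -> 'I_3 -> T).
Let hP := height [set: T].
Hypothesis HsP : sec_data [set: T] cP.
Hypothesis HniceP : nice [set: T].
Hypothesis Hhor : horizon2 [set: T].
Variables (f : T -> T) (R : {set T}).
Hypothesis Hmono : forall x y, x <= y -> f x <= f y.
Hypothesis HfR : forall x, f x \in R.
Hypothesis Hfix : forall r, r \in R -> f r = r.
Variables (s : seq {set T}).
Hypothesis Hsec : forall i, (i < size s)%N -> nice_section (nth set0 s i).
Hypothesis Hlt : forall i j, (i < j < size s)%N -> set_lt (nth set0 s i) (nth set0 s j).
Hypothesis Hdis : forall i j, (i < size s)%N -> (j < size s)%N -> i <> j ->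
            nth set0 s i :&: nth set0 s j = set0.
Hypothesis Hcup : \bigcup_(X <- s) X = R.

Let HgP : grid [set: T] cP hP. Proof. by case: HsP. Qed.
Let HnP : forall k, ~ type33 (level [set: T] k :|: level [set: T] k.+1). Proof. by case: HsP. Qed.

Local Notation rowP := (rowP cP hP).
Local Notation colP := (colP cP hP).

Lemma type33_levels l (A B : {set T}) :
  A :|: B = level R l :|: level R l.+1 -> (0 < #|A|)%N -> (0 < #|B|)%N -> set_lt A B ->
  A = level R l /\ B = level R l.+1.
Proof.
move=> U cA cB AB.
have [a aA] : exists a, a \in A by apply/set0Pn; rewrite -card_gt0.
have [b bB] : exists b, b \in B by apply/set0Pn; rewrite -card_gt0.
have inU : forall x, x \in A :|: B -> x \in level R l \/ x \in level R l.+1.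
  by move=> x; rewrite U inE => /orP.
have AL : forall x, x \in A -> x \in level R l.
  move=> x xA; have [//|xl] := inU x (ltac:(by rewrite inE xA)).
  have [bl|bl] := inU b (ltac:(by rewrite inE bB orbT));
    have := level_lt xl bl (AB _ _ xA bB); by rewrite ?ltnn // ltnNge leqnSn.
have BL : forall x, x \in B -> x \in level R l.+1.
  move=> x xB; have [xl|//] := inU x (ltac:(by rewrite inE xB orbT)).
  have [al|al] := inU a (ltac:(by rewrite inE aA));
    have := level_lt al xl (AB _ _ aA xB); by rewrite ?ltnn // ltnNge leqnSn.
split; apply/setP => x; apply/idP/idP => [|hx]; try by [apply: AL | apply: BL].
  have : x \in A :|: B by rewrite U inE hx.
  rewrite inE => /orP [//|/BL] h; by move: (level_uniq hx h) => /n_Sn.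
have : x \in A :|: B by rewrite U inE hx orbT.
rewrite inE => /orP [/AL h|//]; by move: (level_uniq hx h) => /esym /n_Sn.
Qed.

Lemma G1 l : ~ type33 (level R l :|: level R l.+1).
Proof.
move=> [A [B [[U D cA] [cB anA anB AB]]]].
have [eA eB] := type33_levels U (ltac:(by rewrite cA)) (ltac:(by rewrite cB)) AB.
rewrite eA in cA AB; rewrite eB in cB AB.
have [p [c [b [ps cd nic Hb [bl lh eL]]]]] := row_of_level Hsec Hlt Hcup cA.
have [q [c' [b' [qs cd' nic' Hb' [bl' lh' eL']]]]] := row_of_level Hsec Hlt Hcup cB.
case: (cd) => Hg h1 nt; case: (cd') => Hg' h1' nt'.
set S := nth set0 s p in Hg h1 nt Hb lh eL nic; set S' := nth set0 s q in Hg' h1' nt' Hb' lh' eL' nic'.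
have LS' : level R l.+1 \subset S'.
  by rewrite eL'; apply/subsetP => x /imsetP [j _ ->]; apply: (g_mem Hg').
have LS : level R l \subset S.
  by rewrite eL; apply/subsetP => x /imsetP [j _ ->]; apply: (g_mem Hg).
case: (eqVneq p q) => [epq|npq].
  have LS2 : level R l.+1 \subset S by rewrite /S epq.
  have [bl2 lh2 eL2] := level_in_grid Hg Hb cB LS2.
  have e : (l.+1 - b)%N = (l - b).+1 by lia.
  rewrite e in eL2 lh2.
  apply: (grid_notcomplete Hg nt lh2) => i j.
  by apply: AB; [rewrite eL; apply/imsetP; exists i | rewrite eL2; apply/imsetP; exists j].
have hS := height S; have hS' := height S'.
have top : (l - b)%N = height S.
  apply/eqP; rewrite eqn_leq lh /=; rewrite leqNgt; apply/negP => lt.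
  have : c (l - b).+1 o0 \in level R l.+1.
    have e : (b + (l - b).+1)%N = l.+1 by lia.
    by have := Hb _ o0 lt; rewrite e.
  move=> /(subsetP LS') h2.
  have h3 : c (l - b).+1 o0 \in S by apply: (g_mem Hg).
  by move: (tw_disj Hdis ps qs h3 h2) => e; rewrite e eqxx in npq.
have bot : (l.+1 - b')%N = 0%N.
  apply/eqP; rewrite eqn0Ngt; apply/negP => lt.
  have : c' (l.+1 - b').-1 o0 \in level R l.
    have e : (b' + (l.+1 - b').-1)%N = l by lia.
    have kh : ((l.+1 - b').-1 <= height S')%N by lia.
    by have := Hb' _ o0 kh; rewrite e.
  move=> /(subsetP LS) h2.
  have h3 : c' (l.+1 - b').-1 o0 \in S' by apply: (g_mem Hg'); lia.
  by move: (tw_disj Hdis ps qs h2 h3) => e; rewrite e eqxx in npq.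
rewrite top in eL; rewrite bot in eL'.
have hh : (height S).-1 <> height S by lia.
apply: (core HgP HnP Hhor Hmono HfR Hfix cA cB AB).
- move=> a; rewrite eL => /imsetP [m _ ->].
  have [j [i [ij l1 l2 l3]]] := nice_top cd nic m.
  exists (c (height S).-1 j), (c (height S) j), (c (height S) i); split.
  + apply: (subsetP (tw_sub Hcup ps)); apply: (g_mem Hg); exact: leq_pred.
  + by apply/imsetP; exists j.
  + by apply/imsetP; exists i.
  + apply/negP => /eqP /(g_inj Hg (leqnn _) (leqnn _)) [_ e].
    by rewrite e eqxx in ij.
  + split => //; rewrite le_eqVlt negb_or l3 andbT.
    apply/negP => /eqP /(g_inj Hg (leq_pred _) (leqnn _)) [e _]; exact: hh.
- move=> a; rewrite eL' => /imsetP [m _ ->].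
  have [j [i [ij l1 l2 l3]]] := nice_bot cd' nic' m.
  exists (c' 1 j), (c' 0 j), (c' 0 i); split.
  + by apply: (subsetP (tw_sub Hcup qs)); apply: (g_mem Hg').
  + by apply/imsetP; exists j.
  + by apply/imsetP; exists i.
  + apply/negP => /eqP /(g_inj Hg' (leq0n _) (leq0n _)) [_ e].
    by rewrite e eqxx in ij.
  + split => //; rewrite le_eqVlt negb_or l3 andbT.
    by apply/negP => /eqP /(g_inj Hg' (leq0n _) h1') [].
Qed.


Lemma prow m : #|level R m| = 3 -> exists2 sm, (sm <= hP)%N & level R m = grow cP sm.
Proof.
move=> c3.
have [p [c [b [ps cd nic Hb [bm mh eL]]]]] := row_of_level Hsec Hlt Hcup c3.
case: (cd) => Hg h1 nt.
set S := nth set0 s p in Hg h1 nt Hb mh eL nic.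
set k := (m - b)%N in mh eL.
have anti : forall w1 w2, w1 \in level R m -> w2 \in level R m -> ~ (rowP w1 + 2 <= rowP w2)%N.
  move=> w1 w2 h1' h2' l; have := level_antichain h1' h2'.
  by rewrite (P_hor HgP Hhor l).
have inV : forall a, c k a \in level R m by move=> a; rewrite eL; apply/imsetP; exists a.
have nomix : forall u v, u \in level R m -> v \in level R m -> rowP u = (rowP v).+1 -> False.
  move=> u v uL vL e.
  have rng : forall w, w \in level R m -> (rowP v <= rowP w)%N /\ (rowP w <= (rowP v).+1)%N.
    move=> w wL; have := anti w u wL uL; have := anti v w vL wL.
    rewrite e; clear; lia.
  move: uL vL e rng; rewrite eL => /imsetP [b1 _ ->] /imsetP [b2 _ ->] e rng.
  move: rng e; set s1 := rowP (c k b2) => rng e.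
  have hk : (k <= height S)%N by [].
  have inG : forall a, c k a \in grow c k by move=> a; apply/imsetP; exists a.
  case: (posnP k) => [k0|kpos].
    have h0 : (0 <= height S)%N by [].
    rewrite k0 in e rng inG.
    have rng0 : forall a, (s1 <= rowP (c 0 a))%N /\ (rowP (c 0 a) <= s1.+1)%N.
      by move=> a; apply: rng; apply: inG.
    have sh : forall i j, (c 0 j < c 1 i) = (c 0 (ordS j) < c 1 (ordS i)).
      by move=> i j; apply: (g_shift Hg).
    apply: (@rel_nomix (fun a bb => c 0 bb < c 1 a) sh
                      (fun a => (s1 + 2 <= rowP (c 1 a))%N) b2 b1).
    - by move=> a; apply: (g_chain Hg).
    - by move=> H; apply: (grid_notcomplete Hg nt h1 (k:=0)) => i j; apply: H.
    - by move=> a /= La; apply: (P_hor HgP Hhor); move: La; rewrite /s1 k0.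
    - move=> a /= /(rowP_lt HgP); rewrite e; clear; lia.
    - move=> a /= nLa a' La'; apply: (P_hor HgP Hhor).
      have := rowP_lt HgP (g_chain Hg a h1); have := rng0 a.
      move: nLa La'; clear; lia.
  have km : (k.-1 < height S)%N by lia.
  have km' : (k.-1 <= height S)%N by lia.
  have ek : k.-1.+1 = k by lia.
  have sh : forall i j, (c k.-1 i < c k j) = (c k.-1 (ordS i) < c k (ordS j)).
    by move=> i j; apply: (g_shift Hg).
  apply: (@rel_nomix (fun a bb => c k.-1 a < c k bb) sh
                    (fun a => (rowP (c k.-1 a) + 1 <= s1)%N) b1 b2).
  - by move=> a; rewrite -{2}ek; apply: (g_chain Hg).
  - move=> H; apply: (grid_notcomplete Hg nt km) => i j; rewrite ek; apply: H.
  - move=> a /= La; apply: (P_hor HgP Hhor); rewrite e; move: La; clear; lia.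
  - move=> a /= /(rowP_lt HgP); rewrite -/s1; clear; lia.
  - move=> a /= nLa a' La'; apply: (P_hor HgP Hhor).
    have ch : c k.-1 a < c k a by rewrite -{2}ek; apply: (g_chain Hg).
    have := rowP_lt HgP ch; have := rng _ (inG a).
    move: nLa La'; clear; lia.
have same : forall w1 w2, w1 \in level R m -> w2 \in level R m -> rowP w1 = rowP w2.
  move=> w1 w2 h1' h2'.
  have := anti w1 w2 h1' h2'; have := anti w2 w1 h2' h1'.
  have := nomix w1 w2 h1' h2'; have := nomix w2 w1 h2' h1'.
  clear; lia.
have [v0 v0L] : exists v0, v0 \in level R m by apply/set0Pn; rewrite -card_gt0 c3.
exists (rowP v0); first exact: (rowP_le HgP).
apply/eqP; rewrite eqEcard (card_grow HgP (rowP_le HgP v0)) c3 leqnn andbT.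
apply/subsetP => w wL; apply/imsetP; exists (colP w) => //.
by rewrite -(same w v0 wL v0L) (cP_pos HgP).
Qed.

Lemma G2 : (forall l, (l <= height R)%N -> #|level R l| = 3) -> R = [set: T].
Proof.
move=> H3; set H := height R.
have hP1 : (1 <= hP)%N by case: HsP.
have Rmin : forall r a, r \in R -> a \in level R 0 -> r <= a -> r = a.
  move=> r a rR aL ra; case: (eqVneq r a) => // ne; exfalso.
  have : r < a by rewrite lt_neqAle ne ra.
  by move/(lev_lt rR (subsetP (level_sub R 0) a aL)); rewrite (lev_eq aL).
have Rmax : forall r a, r \in R -> a \in level R H -> a <= r -> r = a.
  move=> r a rR aL ra; case: (eqVneq r a) => // ne; exfalso.
  have : a < r by rewrite lt_neqAle eq_sym ne ra.
  move/(lev_lt (subsetP (level_sub R H) a aL) rR); rewrite (lev_eq aL).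
  have := level_height (lev_spec rR); rewrite -/H; clear; lia.
have aR : forall k a, a \in level R k -> a \in R by move=> k a; apply: (subsetP (level_sub R k)).
have inG : forall k j, cP k j \in grow cP k by move=> k j; apply/imsetP; exists j.
have rowc : forall k j, (k <= hP)%N -> rowP (cP k j) = k by move=> k j kh; case: (pos_cP HgP j kh).
have ne01 : forall k, (k <= hP)%N -> cP k o0 != cP k o1.
  by move=> k kh; apply/negP => /eqP /(g_inj HgP kh kh) [_].
have [s0 s0h e0] := prow (H3 0%N (leq0n _)).
have s00 : s0 = 0%N.
  apply/eqP; rewrite -leqn0 leqNgt; apply/negP => pos.
  have [x [a1 [a2 [a1L [a2L [n12 [x1 x2]]]]]]] : exists x a1 a2, a1 \in level R 0 /\ a2 \in level R 0 /\
      a1 != a2 /\ x < a1 /\ x < a2.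
    case: (ltngtP s0 1) => [|l|e1]; first by lia.
      exists (cP 0 o0), (cP s0 o0), (cP s0 o1); rewrite e0 !inG ne01 //.
      by split=> //; split=> //; split=> //; split; apply: (P_hor HgP Hhor); rewrite !rowc //; lia.
    have [j [i [ij l1 l2 l3]]] := nice_bot HsP HniceP o0.
    exists (cP 0 i), (cP 1 i), (cP 1 j); rewrite e0 e1 !inG.
    split=> //; split=> //; split.
      by apply/negP => /eqP /(g_inj HgP hP1 hP1) [_ e]; rewrite e eqxx in ij.
    by split=> //; apply: (g_chain HgP).
  have f1 : f x <= a1 by rewrite -(Hfix (aR _ _ a1L)); apply: Hmono; apply: ltW.
  have f2 : f x <= a2 by rewrite -(Hfix (aR _ _ a2L)); apply: Hmono; apply: ltW.
  have e1 := Rmin _ _ (HfR x) a1L f1.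
  have e2 := Rmin _ _ (HfR x) a2L f2.
  by move: n12; rewrite -e1 -e2 eqxx.
have ind : forall m, (m <= H)%N -> (m <= hP)%N /\ level R m = grow cP m.
  elim=> [|m IH] mH; first by split; [exact: leq0n | rewrite e0 s00].
  have [mh eLm] := IH (ltnW mH).
  have [sm smh eL] := prow (H3 m.+1 mH).
  have hy : cP sm o0 \in level R m.+1 by rewrite eL inG.
  have [x xL xy] := level_pred hy.
  move: xL; rewrite eLm => /imsetP [i _ ex].
  have lt : (m < sm)%N by move: xy; rewrite ex => xy; exact: (g_lt_row HgP mh smh xy).
  suff e : sm = m.+1 by split; [rewrite -e | rewrite eL e].
  apply/eqP; rewrite eqn_leq lt andbT leqNgt; apply/negP => big.
  apply: (@G1 m); exists (level R m), (level R m.+1); split; [split|split].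
  - by [].
  - apply/setP => z; rewrite in_setI in_set0; apply/negP => /andP [z1 z2].
    by move: (level_uniq z1 z2) => /n_Sn.
  - exact: H3 (ltnW mH).
  - exact: H3 mH.
  - exact: level_anti.
  - exact: level_anti.
  - move=> a b; rewrite eLm eL => /imsetP [ia _ ->] /imsetP [ib _ ->].
    by apply: (P_hor HgP Hhor); rewrite !rowc //; lia.
have [Hh eH] := ind H (leqnn H).
have HhP : H = hP.
  apply/eqP; rewrite eqn_leq Hh /= leqNgt; apply/negP => lt.
  have [x [a1 [a2 [a1L [a2L [n12 [x1 x2]]]]]]] : exists x a1 a2, a1 \in level R H /\ a2 \in level R H /\
      a1 != a2 /\ a1 < x /\ a2 < x.
    case: (ltngtP H.+1 hP) => [l|l|e1]; last 1 first.
    + have [j [i [ij l1 l2 l3]]] := nice_top HsP HniceP o0.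
      have eH1 : hP.-1 = H by rewrite -e1.
      exists (cP hP i), (cP hP.-1 j), (cP hP.-1 i); rewrite eH1 eH !inG.
      split=> //; split=> //; split.
        apply/negP => /eqP /(g_inj HgP Hh Hh) [_ e]; by rewrite e eqxx in ij.
      split; first by rewrite -eH1.
      have hl : (hP.-1 < hP)%N by rewrite ltn_predL.
      have := g_chain HgP i hl.
      by rewrite prednK // eH1.
    + exists (cP hP o0), (cP H o0), (cP H o1); rewrite eH !inG ne01 //.
      by split=> //; split=> //; split=> //; split; apply: (P_hor HgP Hhor); rewrite !rowc //; lia.
    + by lia.
  have f1 : a1 <= f x by rewrite -(Hfix (aR _ _ a1L)); apply: Hmono; apply: ltW.
  have f2 : a2 <= f x by rewrite -(Hfix (aR _ _ a2L)); apply: Hmono; apply: ltW.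
  have e1 := Rmax _ _ (HfR x) a1L f1.
  have e2 := Rmax _ _ (HfR x) a2L f2.
  by move: n12; rewrite -e1 -e2 eqxx.
apply/setP => y; rewrite inE.
have [yh ey] := posP_spec HgP y.
have [_ eL] := ind (rowP y) (ltac:(by rewrite HhP)).
by apply: (aR (rowP y)); rewrite eL; apply/imsetP; exists (colP y).
Qed.

End Final.

Local Close Scope order_scope.

Theorem lemma5p2 (d : Order.disp_t) (T : finPOrderType d) (R : {set T}) :
  in_N2 [set: T] ->
  retract_of R [set: T] ->
  width R = 3 ->
  tower_of_nice_sections R ->
  (forall l : nat, (l < height R)%N -> ~ type33 (level R l :|: level R l.+1)) /\
  ((forall l : nat, (l <= height R)%N -> #|level R l| = 3) -> R = [set: T]).
Proof.
move=> [[secP niceP] wP hP2 hor] [f [fS fmono fidem eR]] _ [s [Hsec Hlt Hdis Hcup]].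
have [cP HsP] : exists cP, sec_data [set: T] cP.
  case: secP => [[_ an]|[h1 [c [[A1 A2 A3] [B1 B2 B3]]]]].
    by move: hP2; rewrite (antichain_height0 an).
  by exists c; split.
have Hmono : forall x y, (x <= y)%O -> (f x <= f y)%O by move=> x y; apply: fmono; rewrite inE.
have HfR : forall x, f x \in R by move=> x; rewrite eR; apply/imsetP; exists x; rewrite ?inE.
have Hfix : forall r, r \in R -> f r = r.
  by move=> r; rewrite eR => /imsetP [x _ ->]; apply: fidem; rewrite inE.
split.
  by move=> l _; exact: (G1 HsP hor Hmono HfR Hfix Hsec Hlt Hdis Hcup).
exact: (G2 HsP niceP hor Hmono HfR Hfix Hsec Hlt Hdis Hcup).
Qed.
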